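(* Let $A$ be a binary matrix and let $U$ be a binary base of $A$ that is disjoint in rows. If, in addition, $A$ has the Unique base rows sums property, then $U$ spans (in the binary sense) every binary base of $A$, and thus $A$ has the Augmentation property for the binary rank.
   Context: For a binary $n\times m$ matrix $A$, $R_{binary}(A)$ is the least $k$ with $A=UV$, $U\in\{0,1\}^{n\times k}$, $V\in\{0,1\}^{k\times m}$, ordinary arithmetic; a decomposition with $k=R_{binary}(A)$ is an optimal binary decomposition. A set $X$ of $\{0,1\}$-vectors spans $y$ (binary sense) if $y=\sum_{x\in X}c_xx$ with $c_x\in\{0,1\}$, ordinary addition; it spans a set $Y$ if it spans each vector of $Y$. A binary base of $A$ is a set of $\{0,1\}$ column vectors spanning every column of $A$, of minimum cardinality among such spanning sets. A base is disjoint in rows if no two distinct vectors of it have a $1$ in the same coordinate. $A$ has the Unique base rows sums property if for every optimal binary decomposition $A=X\cdot Y$ there are no two disjoint nonempty sets of row indices $\{i_1,\dots,i_s\}$, $\{j_1,\dots,j_t\}$ with $y_{i_1}+\dots+y_{i_s}=y_{j_1}+\dots+y_{j_t}$ ($y_i$ the rows of $Y$). $A$ has the Augmentation property for the binary rank if for all binary column vectors $x_1,\dots,x_t$ with $R_{binary}(A|x_i)=R_{binary}(A)$ for all $i$, also $R_{binary}(A|x_1,\dots,x_t)=R_{binary}(A)$, where $(A|x_1,\dots,x_t)$ is $A$ with these columns appended. *)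

(* Defs.v *)
(* Binary matrices are 'M[bool]; arithmetic is done in int
   after the embedding toZ (false |-> 0, true |-> 1), i.e. ordinary arithmetic. *)
From mathcomp Require Import all_boot all_order all_algebra.
Set Implicit Arguments. Unset Strict Implicit. Unset Printing Implicit Defensive.
Import GRing.Theory.
Local Open Scope ring_scope.

Definition toZ (n m : nat) (A : 'M[bool]_(n, m)) : 'M[int]_(n, m) :=
  map_mx (fun b : bool => (nat_of_bool b)%:Z) A.

Definition bdecomp (n m : nat) (A : 'M[bool]_(n, m)) (k : nat) : bool :=
  [exists U : 'M[bool]_(n, k), [exists V : 'M[bool]_(k, m),
     toZ A == toZ U *m toZ V]].

Definition idb (m : nat) : 'M[bool]_m := \matrix_(i, j) (i == j).

Lemma bdecomp_exists (n m : nat) (A : 'M[bool]_(n, m)) : exists k, bdecomp A k.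
Proof.
exists m; apply/existsP; exists A; apply/existsP; exists (idb m).
have -> : toZ (idb m) = 1%:M.
  by apply/matrixP => i j; rewrite !mxE; case: (i == j).
by rewrite mulmx1.
Qed.

Definition Rbin (n m : nat) (A : 'M[bool]_(n, m)) : nat := ex_minn (bdecomp_exists A).

Definition bspans (n : nat) (X : {set 'cV[bool]_n}) (y : 'cV[bool]_n) : bool :=
  [exists S : {set 'cV[bool]_n}, (S \subset X) && (toZ y == \sum_(x in S) toZ x)].

Definition bspans_set (n : nat) (X Y : {set 'cV[bool]_n}) : bool :=
  [forall y in Y, bspans X y].

Definition spans_cols (n m : nat) (A : 'M[bool]_(n, m)) (X : {set 'cV[bool]_n}) : bool :=
  [forall j : 'I_m, bspans X (col j A)].

Definition binary_base (n m : nat) (A : 'M[bool]_(n, m)) (X : {set 'cV[bool]_n}) : bool :=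
  spans_cols A X && [forall X' : {set 'cV[bool]_n}, spans_cols A X' ==> (#|X| <= #|X'|)%N].

Definition disjoint_in_rows (n : nat) (U : {set 'cV[bool]_n}) : Prop :=
  forall u v, u \in U -> v \in U -> u != v -> forall i : 'I_n, ~~ (u i 0 && v i 0).

Definition unique_base_rows_sums (n m : nat) (A : 'M[bool]_(n, m)) : Prop :=
  forall (X : 'M[bool]_(n, Rbin A)) (Y : 'M[bool]_(Rbin A, m)),
    toZ A = toZ X *m toZ Y ->
    forall I J : {set 'I_(Rbin A)},
      I != set0 -> J != set0 -> [disjoint I & J] ->
      \sum_(i in I) row i (toZ Y) != \sum_(j in J) row j (toZ Y).

(* Augmentation property for the binary rank; the appended columns
   x_1..x_t are the columns of xs *)
Definition augmentation_property (n m : nat) (A : 'M[bool]_(n, m)) : Prop :=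
  forall (t : nat) (xs : 'M[bool]_(n, t)),
    (forall i : 'I_t, Rbin (row_mx A (col i xs)) = Rbin A) ->
    Rbin (row_mx A xs) = Rbin A.

(* Main.v *)
Require Import Defs.
From mathcomp Require Import all_boot all_order all_algebra.
Import GRing.Theory Num.Theory.

Lemma Posz_sum (I : finType) (P : pred I) (F : I -> nat) :
  Posz (\sum_(i | P i) F i) = (\sum_(i | P i) Posz (F i))%R.
Proof. by rewrite (big_morph Posz PoszD (erefl (Posz 0))). Qed.

Lemma toZE (n m : nat) (A : 'M[bool]_(n, m)) i j : toZ A i j = Posz (A i j).
Proof. by rewrite /toZ mxE. Qed.

Lemma toZ_mulP (n m k : nat) (A : 'M[bool]_(n, m)) (X : 'M[bool]_(n, k)) Y :
  (toZ A = (toZ X *m toZ Y)%R) <-> (forall r j, (A r j : nat) = \sum_i (X r i && Y i j : nat)).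
Proof.
split.
  move=> /matrixP H r j; move: (H r j); rewrite toZE mxE => /eqP.
  rewrite (eq_bigr (fun i => Posz (X r i && Y i j))); last first.
    by move=> i _; rewrite !toZE -PoszM mulnb.
  by rewrite -Posz_sum => /eqP [].
move=> H; apply/matrixP => r j; rewrite toZE mxE H Posz_sum.
by apply: eq_bigr => i _; rewrite !toZE -PoszM mulnb.
Qed.

Lemma bspansP (n : nat) (X : {set 'cV[bool]_n}) (y : 'cV[bool]_n) :
  reflect (exists2 S : {set 'cV[bool]_n}, S \subset X & forall r, (y r ord0 : nat) = \sum_(x in S) (x r ord0 : nat))
          (bspans X y).
Proof.
apply: (iffP existsP).
  move=> [S /andP [SX /eqP /matrixP E]]; exists S => // r.
  move: (E r ord0); rewrite summxE toZE => H.
  rewrite (eq_bigr (fun x : 'cV[bool]_n => Posz (x r ord0))) in H; last by move=> x _; rewrite toZE.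
  by move: H; rewrite -Posz_sum => -[].
move=> [S SX E]; exists S; rewrite SX /=; apply/eqP/matrixP => r j.
rewrite ord1 summxE toZE E Posz_sum.
by apply: eq_bigr => x _; rewrite toZE.
Qed.


Lemma sumb_gt0 (I : finType) (P : pred I) (F : I -> bool) :
  (0 < \sum_(i | P i) (F i : nat)) = [exists i, P i && F i].
Proof.
apply/idP/existsP.
  move=> H; apply/existsP; apply: contraT; rewrite negb_exists => /forallP no.
  move: H; rewrite big1 // => i Pi; move: (no i); rewrite Pi /=; by case: (F i).
move=> [i /andP [Pi Fi]]; by rewrite (bigD1 i) //= Fi /= add1n.
Qed.

Lemma sumb_uniq (I : finType) (P : pred I) (F : I -> bool) i i' :
  \sum_(j | P j) (F j : nat) <= 1 -> P i -> F i -> P i' -> F i' -> i = i'.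
Proof.
move=> H Pi Fi Pi' Fi'; apply/eqP; apply/negPn/negP => ne.
move: H; rewrite (bigD1 i) //= Fi (bigD1 i') /=; last by rewrite Pi' eq_sym ne.
by rewrite Fi'.
Qed.

Lemma disj_sum (n : nat) (U : {set 'cV[bool]_n}) (T : {set 'cV[bool]_n}) r :
  disjoint_in_rows U -> T \subset U ->
  \sum_(x in T) (x r ord0 : nat) = [exists x in T, x r ord0].
Proof.
move=> hd TU; case: existsP => [[x /andP [xT xr]] | no].
  rewrite (bigD1 x) //= xr big1 // => x' /andP [x'T ne].
  have := hd x x' (subsetP TU x xT) (subsetP TU x' x'T); rewrite eq_sym ne => /(_ isT r).
  by rewrite xr /=; case: (x' r ord0).
rewrite big1 // => x xT; case xr: (x r ord0) => //; exfalso; apply: no; exists x; by rewrite xT xr.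
Qed.

Lemma col_entry (n m : nat) (A : 'M[bool]_(n, m)) j r : (col j A) r ord0 = A r j.
Proof. by rewrite mxE. Qed.

Lemma spans_colsP (n m : nat) (A : 'M[bool]_(n, m)) X :
  spans_cols A X <-> forall j, exists2 S : {set 'cV[bool]_n}, S \subset X &
      forall r, (A r j : nat) = \sum_(x in S) (x r ord0 : nat).
Proof.
split.
  move=> /forallP H j; have /bspansP [S SX E] := H j; exists S => // r; by rewrite -E col_entry.
move=> H; apply/forallP => j; apply/bspansP; have [S SX E] := H j; exists S => // r.
by rewrite col_entry E.
Qed.

Lemma rows_eq (n m : nat) (A : 'M[bool]_(n, m)) U u r s :
  spans_cols A U -> disjoint_in_rows U -> u \in U -> u r ord0 -> u s ord0 ->
  forall j, A r j = A s j.
Proof.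
move=> /spans_colsP hs hd uU ur us j.
have [S SU E] := hs j.
have key : forall t, u t ord0 -> A t j = (u \in S).
  move=> t ut; have := E t; rewrite (@disj_sum _ _ _ _ hd SU).
  suff -> : [exists x in S, x t ord0] = (u \in S) by case: (A t j); case: (u \in S).
  apply/existsP/idP.
    move=> [x /andP [xS xt]]; case: (x =P u) => [<- //|/eqP ne].
    by have := hd x u (subsetP SU x xS) uU ne t; rewrite xt ut.
  by move=> uS; exists u; rewrite uS ut.
by rewrite key // key.
Qed.


Lemma Rbin_le (n m : nat) (A : 'M[bool]_(n, m)) k : bdecomp A k -> Rbin A <= k.
Proof. rewrite /Rbin; case: ex_minnP => k0 _ H; exact: H. Qed.

Lemma Rbin_dec (n m : nat) (A : 'M[bool]_(n, m)) : bdecomp A (Rbin A).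
Proof. rewrite /Rbin; by case: ex_minnP. Qed.

Lemma bdecompP (n m k : nat) (A : 'M[bool]_(n, m)) :
  reflect (exists (X : 'M[bool]_(n, k)) (Y : 'M[bool]_(k, m)),
            forall r j, (A r j : nat) = \sum_i (X r i && Y i j : nat))
          (bdecomp A k).
Proof.
apply: (iffP existsP).
  move=> [X /existsP [Y /eqP /toZ_mulP H]]; by exists X, Y.
move=> [X [Y H]]; exists X; apply/existsP; exists Y; apply/eqP/toZ_mulP.
exact: H.
Qed.

Lemma span_decomp (n m : nat) (A : 'M[bool]_(n, m)) (X : {set 'cV[bool]_n}) k :
  #|X| = k -> spans_cols A X ->
  exists (f : 'I_k -> 'cV[bool]_n) (S : 'I_m -> {set 'cV[bool]_n}),
    [/\ forall x, x \in X -> exists i, f i = x,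
        forall j, S j \subset X,
        forall r j, (A r j : nat) = \sum_(x in S j) (x r ord0 : nat) &
        forall r j, (A r j : nat) = \sum_i (f i r ord0 && (f i \in S j) : nat)].
Proof.
move=> h; case: k / h => /spans_colsP hs.
have hs' : forall j, exists S0 : {set 'cV[bool]_n}, S0 \subset X /\
      forall r, (A r j : nat) = \sum_(x in S0) (x r ord0 : nat).
  by move=> j; have [S0 a b] := hs j; exists S0.
have [S HS] := fin_all_exists hs'.
exists enum_val, S; split.
- move=> x xX; exists (enum_rank_in xX x); by rewrite enum_rankK_in.
- by move=> j; case: (HS j).
- by move=> r j; case: (HS j).
move=> r j; have [SX ->] := HS j.
rewrite -(big_enum_val (fun x : 'cV[bool]_n => (x r ord0 && (x \in S j) : nat))).
rewrite big_mkcond [RHS]big_mkcond; apply: eq_bigr => x _.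
case xS: (x \in S j); first by rewrite (subsetP SX x xS) andbT.
by rewrite andbF; case: (x \in X).
Qed.

Lemma Rbin_span (n m : nat) (A : 'M[bool]_(n, m)) (X : {set 'cV[bool]_n}) :
  spans_cols A X -> Rbin A <= #|X|.
Proof.
move=> hs; have [f [S [_ _ _ E]]] := @span_decomp _ _ A X _ (erefl _) hs.
apply: Rbin_le; apply/bdecompP.
exists (\matrix_(r, i) f i r ord0)%R, (\matrix_(i, j) (f i \in S j))%R.
move=> r j; rewrite E; apply: eq_bigr => i _; by rewrite !mxE.
Qed.

Lemma decomp_span (n m k : nat) (A : 'M[bool]_(n, m)) :
  bdecomp A k -> exists X : {set 'cV[bool]_n}, #|X| <= k /\ spans_cols A X.
Proof.
move=> /bdecompP [X [Y H]].
exists [set col i X | i : 'I_k]; split.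
  by apply: leq_trans (leq_imset_card _ _) _; rewrite card_ord.
apply/spans_colsP => j.
exists [set col i X | i in [set i | Y i j]].
  by apply/subsetP => x /imsetP [i _ ->]; apply: imset_f.
move=> r; rewrite H.
case Hs: (0 < \sum_i (X r i && Y i j : nat)).
  have := Hs; rewrite sumb_gt0 => /existsP [i0 /= Hi0].
  have le1 : \sum_i (X r i && Y i j : nat) <= 1.
    by rewrite -H; case: (A r j).
  rewrite (bigD1 (col i0 X)) /=; last first.
    by apply: imset_f; rewrite inE; case/andP: Hi0.
  rewrite [in RHS]big1.
    have -> : \sum_i (X r i && Y i j : nat) = 1.
      by apply/eqP; rewrite eqn_leq le1 Hs.
    by rewrite col_entry; case/andP: Hi0 => -> .
  move=> x /andP [/imsetP [i]]; rewrite inE => Yi -> ne.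
  rewrite col_entry; case Xi: (X r i) => //.
  have := @sumb_uniq _ (fun _ => true) (fun i => X r i && Y i j) i0 i le1 isT Hi0 isT.
  by rewrite Xi Yi => /(_ isT) eq; move: ne; rewrite eq eqxx.
have -> : \sum_i (X r i && Y i j : nat) = 0 by move: Hs; case: (\sum_i _).
rewrite big1 // => x /imsetP [i]; rewrite inE => Yi ->.
rewrite col_entry; case Xi: (X r i) => //.
move: Hs; rewrite sumb_gt0 => /negbT; rewrite negb_exists => /forallP /(_ i).
by rewrite Xi Yi.
Qed.


Lemma base_card (n m : nat) (A : 'M[bool]_(n, m)) (B : {set 'cV[bool]_n}) :
  binary_base A B -> #|B| = Rbin A.
Proof.
move=> /andP [hs /forallP hmin]; apply/eqP; rewrite eqn_leq Rbin_span // andbT.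
have [X0 [le0 hs0]] := decomp_span _ _ _ _ (Rbin_dec _ _ A).
by apply: leq_trans le0; move/implyP: (hmin X0); apply.
Qed.

Lemma rowsum_entry (k m : nat) (Y : 'M[bool]_(k, m)) (I : {set 'I_k}) a j :
  (\sum_(i in I) row i (toZ Y))%R a j = Posz (\sum_(i in I) (Y i j : nat)).
Proof.
rewrite summxE Posz_sum; apply: eq_bigr => i _; by rewrite mxE toZE.
Qed.

Lemma keyK (n m : nat) (A : 'M[bool]_(n, m)) (U : {set 'cV[bool]_n})
  (hs : spans_cols A U) (hd : disjoint_in_rows U) (hP : unique_base_rows_sums A)
  (X : 'M[bool]_(n, Rbin A)) (Y : 'M[bool]_(Rbin A, m))
  (hXY : forall r j, (A r j : nat) = \sum_i (X r i && Y i j : nat)) l j0 :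
  Y l j0 -> bspans U (col l X).
Proof.
move=> hY.
have hXYZ : toZ A = (toZ X *m toZ Y)%R by apply/toZ_mulP.
have sat : forall r s, X r l -> ~~ X s l -> (forall j, A r j = A s j) -> False.
  move=> r s Xr Xs Ers.
  set I := [set i | X r i && ~~ X s i]; set J := [set i | X s i && ~~ X r i].
  have eqIJ : forall j, \sum_(i in I) (Y i j : nat) = \sum_(i in J) (Y i j : nat).
    move=> j; have := hXY r j; rewrite Ers hXY.
    have split : forall t t', \sum_i (X t i && Y i j : nat) =
        \sum_i (X t i && X t' i && Y i j : nat) + \sum_(i in [set i | X t i && ~~ X t' i]) (Y i j : nat).
      move=> t t'; rewrite [Z in _ + Z]big_mkcond -big_split /=; apply: eq_bigr => i _.
      by rewrite inE; case: (X t i); case: (X t' i); case: (Y i j).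
    rewrite (split s r) (split r s).
    have -> : \sum_i (X s i && X r i && Y i j : nat) = \sum_i (X r i && X s i && Y i j : nat).
      by apply: eq_bigr => i _; rewrite (andbC (X s i)).
    by move/addnI ->.
  have lI : l \in I by rewrite inE Xr Xs.
  case: (boolP (J == set0)) => [/eqP J0 | Jn0].
    have := eqIJ j0; rewrite J0 big_set0 (bigD1 l) //= hY.
    by rewrite add1n.
  have In0 : I != set0 by apply/set0Pn; exists l.
  have disj : [disjoint I & J].
    rewrite -setI_eq0; apply/eqP/setP => i; rewrite !inE; by case: (X r i); case: (X s i).
  apply: (negP (hP X Y hXYZ I J In0 Jn0 disj)).
  by apply/eqP/matrixP => a j; rewrite !rowsum_entry eqIJ.
have cover : forall r, X r l -> exists2 u, u \in U & u r ord0.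
  move=> r Xr; apply/exists_inP; apply: contraT; rewrite negb_exists_in => /forall_inP no.
  have /spans_colsP hs' := hs; have [S0 SU E] := hs' j0.
  have := E r; rewrite (@disj_sum _ _ _ _ hd SU) hXY.
  have -> : [exists x in S0, x r ord0] = false.
    apply/negbTE; rewrite negb_exists_in; apply/forall_inP => x xS0.
    exact: no (subsetP SU x xS0).
  by rewrite (bigD1 l) //= Xr hY.
apply/bspansP.
exists [set u in U | [forall s, u s ord0 ==> X s l]].
  by apply/subsetP => u; rewrite inE => /andP [].
move=> r; rewrite col_entry (@disj_sum _ _ _ _ hd) ?(subsetP) //; last first.
  by apply/subsetP => u; rewrite inE => /andP [].
congr nat_of_bool; apply/idP/existsP.
  move=> Xr; have [u uU ur] := cover r Xr; exists u; rewrite inE uU ur /= andbT.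
  apply/forallP => s; apply/implyP => us; apply: contraT => Xs; exfalso.
  exact: (sat r s Xr Xs (rows_eq _ _ _ _ _ _ _ hs hd uU ur us)).
by move=> [x /andP [xS xr]]; move: xS; rewrite inE => /andP [_ /forallP /(_ r)]; rewrite xr.
Qed.


Lemma part1 (n m : nat) (A : 'M[bool]_(n, m)) (U : {set 'cV[bool]_n}) :
  binary_base A U -> disjoint_in_rows U -> unique_base_rows_sums A ->
  forall B : {set 'cV[bool]_n}, binary_base A B -> bspans_set U B.
Proof.
move=> hU hd hP B hB.
case/andP: (hU) => hsU _.
have cB := base_card _ _ _ _ hB.
case/andP: (hB) => hsB /forallP hminB.
have [f [S [fsurj SB ES E]]] := span_decomp _ _ A B (Rbin A) cB hsB.
apply/forall_inP => b bB.
have [i fi] := fsurj b bB.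
have [j bSj] : exists j, b \in S j.
  case: (boolP [exists j, b \in S j]) => [/existsP //|]; rewrite negb_exists => /forallP no.
  have hs' : spans_cols A (B :\ b).
    apply/spans_colsP => j; exists (S j); last by move=> r; apply: ES.
    apply/subsetP => x xS; rewrite !inE (subsetP (SB j) x xS) andbT.
    by apply: contraTneq xS => ->; apply: no.
  by have := hminB (B :\ b); rewrite hs' /= (cardsD1 b B) bB add1n ltnn.
set Xm := (\matrix_(r, i) f i r ord0)%R : 'M[bool]_(n, Rbin A).
set Ym := (\matrix_(i, j) (f i \in S j))%R : 'M[bool]_(Rbin A, m).
have hXY : forall r j, (A r j : nat) = \sum_i (Xm r i && Ym i j : nat).
  by move=> r j'; rewrite E; apply: eq_bigr => i' _; rewrite !mxE.
have := keyK _ _ A U hsU hd hP Xm Ym hXY i j.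
have -> : col i Xm = b by apply/matrixP => r c; rewrite ord1 !mxE fi.
by apply; rewrite mxE fi.
Qed.


Lemma trans_span (n : nat) (U X : {set 'cV[bool]_n}) (y : 'cV[bool]_n) :
  disjoint_in_rows U -> bspans_set U X -> bspans X y -> bspans U y.
Proof.
move=> hd /forall_inP hUX /bspansP [S SX E].
have hT : forall x : 'cV[bool]_n, exists T : {set 'cV[bool]_n}, x \in S ->
    T \subset U /\ forall r, (x r ord0 : nat) = \sum_(u in T) (u r ord0 : nat).
  move=> x; case: (boolP (x \in S)) => xS; last by exists set0.
  have /bspansP [T TU ET] := hUX x (subsetP SX x xS); by exists T.
have [T HT] := fin_all_exists hT.
have TU : \bigcup_(x in S) T x \subset U.
  by apply/bigcupsP => x xS; case: (HT x xS).
apply/bspansP; exists (\bigcup_(x in S) T x) => // r.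
rewrite (disj_sum _ _ _ r hd TU).
suff : (0 < (y r ord0 : nat)) = [exists u in \bigcup_(x in S) T x, u r ord0].
  by case: (y r ord0); case: [exists _ in _, _].
rewrite E sumb_gt0; apply/existsP/exists_inP.
  move=> [x /andP [xS xr]].
  have : 0 < (x r ord0 : nat) by rewrite xr.
  rewrite ((HT x xS).2 r) sumb_gt0 => /existsP [u /andP [uT ur]].
  by exists u => //; apply/bigcupP; exists x.
move=> [u /bigcupP [x xS uT] ur]; exists x; rewrite xS /=.
have : 0 < (x r ord0 : nat).
  by rewrite ((HT x xS).2 r) sumb_gt0; apply/existsP; exists u; rewrite uT ur.
by case: (x r ord0).
Qed.

Lemma colL (n m t : nat) (A : 'M[bool]_(n, m)) (xs : 'M[bool]_(n, t)) j :
  col (lshift t j) (row_mx A xs) = col j A.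
Proof. by apply/matrixP => r c; rewrite ord1 !col_entry row_mxEl. Qed.

Lemma colR (n m t : nat) (A : 'M[bool]_(n, m)) (xs : 'M[bool]_(n, t)) j :
  col (rshift m j) (row_mx A xs) = col j xs.
Proof. by apply/matrixP => r c; rewrite ord1 !col_entry row_mxEr. Qed.

Lemma part2 (n m : nat) (A : 'M[bool]_(n, m)) (U : {set 'cV[bool]_n}) :
  binary_base A U -> disjoint_in_rows U -> unique_base_rows_sums A ->
  augmentation_property A.
Proof.
move=> hU hd hP t xs hyp.
apply/eqP; rewrite eqn_leq; apply/andP; split; last first.
  apply: Rbin_le; have /bdecompP [X [Y H]] := Rbin_dec _ _ (row_mx A xs).
  apply/bdecompP; exists X, (\matrix_(i, j) Y i (lshift t j))%R => r j.
  rewrite -(row_mxEl A xs) H; apply: eq_bigr => i _; by rewrite mxE.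
rewrite -(base_card _ _ _ _ hU); apply: Rbin_span.
case/andP: (hU) => hsU _.
apply/forallP => c; rewrite -(splitK c); case: (split c) => [j|i] /=.
  by rewrite colL; exact: (forallP hsU j).
rewrite colR.
set Ai := row_mx A (col i xs).
have [X0 [le0 hs0]] := decomp_span _ _ _ _ (Rbin_dec _ _ Ai).
have hsA : spans_cols A X0.
  by apply/forallP => j; have := forallP hs0 (lshift 1 j); rewrite colL.
have hbase : binary_base A X0.
  rewrite /binary_base hsA /=; apply/forallP => X'; apply/implyP => hX'.
  by rewrite (leq_trans le0) // hyp; exact: Rbin_span.
have hUX := part1 _ _ _ _ hU hd hP X0 hbase.
apply: (trans_span _ _ _ _ hd hUX).
have := forallP hs0 (rshift m ord0); rewrite colR.
suff -> : col ord0 (col i xs) = col i xs by [].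
by apply/matrixP => r c0; rewrite !mxE.
Qed.

Theorem mainTheorem17 (n m : nat) (A : 'M[bool]_(n, m)) (U : {set 'cV[bool]_n}) :
  binary_base A U -> disjoint_in_rows U -> unique_base_rows_sums A ->
  (forall B : {set 'cV[bool]_n}, binary_base A B -> bspans_set U B) /\
  augmentation_property A.
Proof.
move=> hU hd hP; split.
  exact: part1 hU hd hP.
exact: part2 hU hd hP.
Qed.
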